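(* Let $(\mathcal{T},\Sigma)$ be a triangulated category and let $\mathcal{C}$ be an $(n-2)$-cluster tilting subcategory of $\mathcal{T}$ (for an integer $n\ge 4$) which is closed under $\Sigma^{n-2}$, and let $(\mathcal{C},\widehat{\Sigma})$, $\widehat{\Sigma}=\Sigma^{n-2}$, be the associated $n$-angulated category. Then there is a well-defined surjective group homomorphism $K_0(\mathcal{C})\to K_0(\mathcal{T})$ sending $[A]-[B]$ (computed in $K_0(\mathcal{C})$) to $[A]-[B]$ (computed in $K_0(\mathcal{T})$) for all objects $A,B$ of $\mathcal{C}$.
   Context: All categories are small. $(\mathcal{T},\Sigma)$ is a triangulated category (suspension $\Sigma$); $K_0(\mathcal{T})$ is its Grothendieck group: the free abelian group on isomorphism classes of objects modulo $\langle X\rangle-\langle Y\rangle+\langle Z\rangle$ for every triangle $X\to Y\to Z\to\Sigma X$; $[X]$ denotes the class of $X$. A full subcategory $\mathcal{C}\subseteq\mathcal{T}$ is contravariantly (resp. covariantly) finite if every object of $\mathcal{T}$ has a right (resp. left) $\mathcal{C}$-approximation, where a right $\mathcal{C}$-approximation of $X$ is a morphism $f:C\to X$ with $C\in\mathcal{C}$ such that every morphism $C'\to X$ with $C'\in\mathcal{C}$ factors through $f$ (left approximations dually); functorially finite means both. For $t\ge 2$, $\mathcal{C}$ is $t$-cluster tilting if it is functorially finite and $\mathcal{C}=\{A\in\mathcal{T}\mid \operatorname{Hom}_{\mathcal{T}}(A,\Sigma^iC)=0\text{ for }1\le i\le t-1,\ C\in\mathcal{C}\}=\{B\in\mathcal{T}\mid\operatorname{Hom}_{\mathcal{T}}(\Sigma^iC,B)=0\text{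 for }1\le i\le t-1,\ C\in\mathcal{C}\}$. If $\mathcal{C}$ is $(n-2)$-cluster tilting and closed under $\widehat{\Sigma}=\Sigma^{n-2}$, declare a sequence $A_1\xrightarrow{\alpha_1}A_2\to\cdots\xrightarrow{\alpha_{n-1}}A_n\xrightarrow{\alpha_n}\widehat{\Sigma}A_1$ in $\mathcal{C}$ to be an $n$-angle if there exist objects $X_1,\dots,X_{n-3}$ of $\mathcal{T}$ and triangles in $\mathcal{T}$: $A_1\xrightarrow{\alpha_1}A_2\xrightarrow{f_1}X_1\xrightarrow{\partial_{n-2}}\Sigma A_1$; $X_{i-1}\xrightarrow{g_{i-1}}A_{i+1}\xrightarrow{f_i}X_i\xrightarrow{\partial_{n-1-i}}\Sigma X_{i-1}$ for $2\le i\le n-3$; and $X_{n-3}\xrightarrow{g_{n-3}}A_{n-1}\xrightarrow{\alpha_{n-1}}A_n\xrightarrow{\partial_1}\Sigma X_{n-3}$, such that $\alpha_{i+1}=g_i\circ f_i$ for $1\le i\le n-3$ and $\alpha_n=\Sigma^{n-3}\partial_{n-2}\circ\Sigma^{n-4}\partial_{n-3}\circ\cdots\circ\partial_1$. By Geiss–Keller–Oppermann, $(\mathcal{C},\widehat{\Sigma})$ with these $n$-angles is an $n$-angulated category. Grothendieck group of an $n$-angulated category $(\mathcal{C},\widehat\Sigma)$: let $F(\mathcal{C})$ be the free abelian group on the isomorphism classes $\langle A\rangle$ of objects; for an $n$-angle $A_\bullet$ put $\chi(A_\bullet)=\sum_{i=1}^n(-1)^{i+1}\langle A_i\rangle$;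 $R(\mathcal{C})$ is the subgroup generated by all $\chi(A_\bullet)$, together with $\langle 0\rangle$ when $n$ is even; $K_0(\mathcal{C})=F(\mathcal{C})/R(\mathcal{C})$ with $[A]$ the class of $\langle A\rangle$. (Every element of $K_0(\mathcal{C})$ has the form $[A]-[B]$.) *)

(* Defs.v *)
From mathcomp Require Import all_boot all_algebra.
From mathcomp Require Import boolp.
From Stdlib Require List.
Unset Printing Implicit Defensive.
Import GRing.Theory.
Local Open Scope ring_scope.

Record TriData := {
  Obj : Type;
  Hom : Obj -> Obj -> zmodType;
  comp : forall X Y Z : Obj, Hom Y Z -> Hom X Y -> Hom X Z;
  idm : forall X : Obj, Hom X X;
  zero_obj : Obj;
  Sig : Obj -> Obj;
  Sigm : forall X Y : Obj, Hom X Y -> Hom (Sig X) (Sig Y);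
  dist : forall X Y Z : Obj, Hom X Y -> Hom Y Z -> Hom Z (Sig X) -> Prop
}.
Arguments Hom : clear implicits.
Arguments comp {t X Y Z}.
Arguments idm {t}.
Arguments zero_obj {t}.
Arguments Sig {t}.
Arguments Sigm {t X Y}.
Arguments dist {t X Y Z}.

Section Defs.
Variable T : TriData.

Definition isIsoM (X Y : Obj T) (f : Hom T X Y) : Prop :=
  exists g : Hom T Y X, comp g f = idm X /\ comp f g = idm Y.
Arguments isIsoM {X Y}.

Definition iso (X Y : Obj T) : Prop := exists f : Hom T X Y, isIsoM f.

Record is_triangulated : Prop := {
  compA : forall (X Y Z W : Obj T) (h : Hom T Z W) (g : Hom T Y Z) (f : Hom T X Y),
      comp h (comp g f) = comp (comp h g) f;
  comp1m : forall (X Y : Obj T) (f : Hom T X Y), comp (idm Y) f = f;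
  compm1 : forall (X Y : Obj T) (f : Hom T X Y), comp f (idm X) = f;
  compDl : forall (X Y Z : Obj T) (g1 g2 : Hom T Y Z) (f : Hom T X Y),
      comp (g1 + g2) f = comp g1 f + comp g2 f;
  compDr : forall (X Y Z : Obj T) (g : Hom T Y Z) (f1 f2 : Hom T X Y),
      comp g (f1 + f2) = comp g f1 + comp g f2;
  zero_from : forall (X : Obj T) (f : Hom T zero_obj X), f = 0;
  zero_to : forall (X : Obj T) (f : Hom T X zero_obj), f = 0;
  biprod : forall X Y : Obj T, exists (P : Obj T) (i1 : Hom T X P) (i2 : Hom T Y P)
      (p1 : Hom T P X) (p2 : Hom T P Y),
      [/\ comp p1 i1 = idm X, comp p2 i2 = idm Y, comp p1 i2 = 0, comp p2 i1 = 0
        & comp i1 p1 + comp i2 p2 = idm P];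
  Sigm1 : forall X : Obj T, Sigm (idm X) = idm (Sig X);
  SigmM : forall (X Y Z : Obj T) (g : Hom T Y Z) (f : Hom T X Y),
      Sigm (comp g f) = comp (Sigm g) (Sigm f);
  SigmD : forall (X Y : Obj T) (f1 f2 : Hom T X Y), Sigm (f1 + f2) = Sigm f1 + Sigm f2;
  Sigm_inj : forall X Y : Obj T, injective (@Sigm T X Y);
  Sigm_surj : forall (X Y : Obj T) (g : Hom T (Sig X) (Sig Y)), exists f, Sigm f = g;
  Sig_ess : forall Y : Obj T, exists X, iso (Sig X) Y;
  TR1_iso : forall (X Y Z X' Y' Z' : Obj T)
      (f : Hom T X Y) (g : Hom T Y Z) (h : Hom T Z (Sig X))
      (f' : Hom T X' Y') (g' : Hom T Y' Z') (h' : Hom T Z' (Sig X'))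
      (a : Hom T X X') (b : Hom T Y Y') (c : Hom T Z Z'),
      isIsoM a -> isIsoM b -> isIsoM c ->
      comp b f = comp f' a -> comp c g = comp g' b -> comp (Sigm a) h = comp h' c ->
      dist f g h -> dist f' g' h';
  TR1_id : forall X : Obj T,
      dist (idm X) (0 : Hom T X zero_obj) (0 : Hom T zero_obj (Sig X));
  TR1_ext : forall (X Y : Obj T) (f : Hom T X Y),
      exists (Z : Obj T) (g : Hom T Y Z) (h : Hom T Z (Sig X)), dist f g h;
  TR2 : forall (X Y Z : Obj T) (f : Hom T X Y) (g : Hom T Y Z) (h : Hom T Z (Sig X)),
      dist f g h <-> dist g h (- Sigm f);
  TR3 : forall (X Y Z X' Y' Z' : Obj T)
      (f : Hom T X Y) (g : Hom T Y Z) (h : Hom T Z (Sig X))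
      (f' : Hom T X' Y') (g' : Hom T Y' Z') (h' : Hom T Z' (Sig X'))
      (a : Hom T X X') (b : Hom T Y Y'),
      dist f g h -> dist f' g' h' -> comp b f = comp f' a ->
      exists c : Hom T Z Z', comp c g = comp g' b /\ comp (Sigm a) h = comp h' c;
  TR4 : forall (X Y Z Q1 Q2 Q3 : Obj T) (f : Hom T X Y) (g : Hom T Y Z)
      (p1 : Hom T Y Q1) (d1 : Hom T Q1 (Sig X))
      (p2 : Hom T Z Q2) (d2 : Hom T Q2 (Sig X))
      (p3 : Hom T Z Q3) (d3 : Hom T Q3 (Sig Y)),
      dist f p1 d1 -> dist (comp g f) p2 d2 -> dist g p3 d3 ->
      exists (a : Hom T Q1 Q2) (b : Hom T Q2 Q3),
      [/\ dist a b (comp (Sigm p1) d3),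
          comp a p1 = comp p2 g, comp d2 a = d1,
          comp b p2 = p3 & comp d3 b = comp (Sigm f) d2]
}.

Definition SigN (i : nat) (X : Obj T) : Obj T := iter i (@Sig T) X.

Definition right_approx (C : Obj T -> Prop) (X : Obj T) : Prop :=
  exists (C0 : Obj T) (f : Hom T C0 X), C C0 /\
    forall (C' : Obj T) (g : Hom T C' X), C C' -> exists h : Hom T C' C0, comp f h = g.

Definition left_approx (C : Obj T -> Prop) (X : Obj T) : Prop :=
  exists (C0 : Obj T) (f : Hom T X C0), C C0 /\
    forall (C' : Obj T) (g : Hom T X C'), C C' -> exists h : Hom T C0 C', comp h f = g.

Definition contravariantly_finite (C : Obj T -> Prop) : Prop :=
  forall X : Obj T, right_approx C X.
Definition covariantly_finite (C : Obj T -> Prop) : Prop :=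
  forall X : Obj T, left_approx C X.
Definition functorially_finite (C : Obj T -> Prop) : Prop :=
  contravariantly_finite C /\ covariantly_finite C.

Definition cluster_tilting (t : nat) (C : Obj T -> Prop) : Prop :=
  [/\ functorially_finite C,
      (forall A : Obj T, C A <->
         (forall (i : nat), (1 <= i <= t - 1)%N -> forall (X : Obj T), C X ->
            forall f : Hom T A (SigN i X), f = 0))
    & (forall B : Obj T, C B <->
         (forall (i : nat), (1 <= i <= t - 1)%N -> forall (X : Obj T), C X ->
            forall f : Hom T (SigN i X) B, f = 0))].

(* The composite  Sig^{j} d_first o Sig^{j-1} d_1 o ... o d_j  :
   X_{j+1} -> Sig^{j+1} A_1, built recursively by E_{j+1} = Sig(E_j) o d_{j+1}. *)
Fixpoint Ecomp (A1 : Obj T) (X : nat -> Obj T) (e : Hom T (X 1%N) (Sig A1))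
    (d : forall j : nat, Hom T (X j.+1) (Sig (X j))) (j : nat)
    : Hom T (X j.+1) (iter j.+1 (@Sig T) A1) :=
  match j return Hom T (X j.+1) (iter j.+1 (@Sig T) A1) with
  | 0 => e
  | j'.+1 => comp (Sigm (Ecomp A1 X e d j')) (d j'.+1)
  end.

(* A_1 -a_1-> A_2 -> ... -a_{n-1}-> A_n -alast-> Sig^{n-2} A_1  (n = k+4,
   objects indexed 1..n) is an n-angle.  In the notation of the paper:
   X_i = X i, f_i = f i, g_i = g i, partial_{n-2} = e,
   partial_{n-1-i} = d (i-1) for 2 <= i <= n-3, partial_1 = dl. *)
Definition nangle_k (k : nat) (A : nat -> Obj T) (alpha : forall i : nat, Hom T (A i) (A i.+1))
    (alast : Hom T (A k.+4) (iter k.+2 (@Sig T) (A 1%N))) : Prop :=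
  exists (X : nat -> Obj T) (f : forall i : nat, Hom T (A i.+1) (X i))
         (g : forall i : nat, Hom T (X i) (A i.+2)) (e : Hom T (X 1%N) (Sig (A 1%N)))
         (d : forall j : nat, Hom T (X j.+1) (Sig (X j))) (dl : Hom T (A k.+4) (Sig (X k.+1))),
  [/\ dist (alpha 1%N) (f 1%N) e,
      (forall j : nat, (1 <= j <= k)%N -> dist (g j) (f j.+1) (d j)),
      dist (g k.+1) (alpha k.+3) dl,
      (forall i : nat, (1 <= i <= k.+1)%N -> alpha i.+1 = comp (g i) (f i))
    & alast = comp (Sigm (Ecomp (A 1%N) X e d k)) dl].

(* An element of the free abelian group on isomorphism classes is
   represented by a finite formal sum  sum_i c_i <X_i>; two formal sums
   represent the same element iff they have the same coefficient on every
   isomorphism class. *)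
Definition fsum := seq (int * Obj T).

Definition coeff (s : fsum) (Y : Obj T) : int :=
  \sum_(p <- s) (if asbool (iso p.2 Y) then p.1 else 0).

Definition fneg (s : fsum) : fsum := [seq (- p.1, p.2) | p <- s].

Definition all_in (C : Obj T -> Prop) (s : fsum) : Prop :=
  forall p, List.In p s -> C p.2.

Inductive RT : fsum -> Prop :=
  | RT_gen (X Y Z : Obj T) (f : Hom T X Y) (g : Hom T Y Z) (h : Hom T Z (Sig X)) :
      dist f g h -> RT [:: (1, X); (-1, Y); (1, Z)]
  | RT_nil : RT [::]
  | RT_cat s1 s2 : RT s1 -> RT s2 -> RT (s1 ++ s2)
  | RT_opp s : RT s -> RT (fneg s)
  | RT_ext s s' : coeff s =1 coeff s' -> RT s -> RT s'.

Definition chi (k : nat) (A : nat -> Obj T) : fsum :=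
  [seq ((-1) ^+ i.+1, A i) | i <- iota 1 k.+4].

Inductive RC (C : Obj T -> Prop) (n : nat) : fsum -> Prop :=
  | RC_gen (A : nat -> Obj T) (alpha : forall i : nat, Hom T (A i) (A i.+1))
      (alast : Hom T (A (n - 4)%N.+4) (iter (n - 4)%N.+2 (@Sig T) (A 1%N))) :
      (forall i : nat, (1 <= i <= (n - 4)%N.+4)%N -> C (A i)) ->
      nangle_k (n - 4)%N A alpha alast -> RC C n (chi (n - 4)%N A)
  | RC_zero : ~~ odd n -> RC C n [:: (1, zero_obj)]
  | RC_nil : RC C n [::]
  | RC_cat s1 s2 : RC C n s1 -> RC C n s2 -> RC C n (s1 ++ s2)
  | RC_opp s : RC C n s -> RC C n (fneg s)
  | RC_ext s s' : coeff s =1 coeff s' -> RC C n s -> RC C n s'.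

Definition K0T_eq (s s' : fsum) : Prop := RT (s ++ fneg s').
Definition K0C_eq (C : Obj T -> Prop) (n : nat) (s s' : fsum) : Prop :=
  RC C n (s ++ fneg s').

End Defs.

Arguments isIsoM {T X Y}.
Arguments iso {T}.
Arguments SigN {T}.
Arguments right_approx {T}.
Arguments left_approx {T}.
Arguments contravariantly_finite {T}.
Arguments covariantly_finite {T}.
Arguments functorially_finite {T}.
Arguments cluster_tilting {T}.
Arguments Ecomp {T}.
Arguments nangle_k {T}.
Arguments coeff {T}.
Arguments fneg {T}.
Arguments all_in {T}.
Arguments chi {T}.
Arguments K0T_eq {T}.
Arguments K0C_eq {T}.

(* Main.v *)
Require Import Defs.
From mathcomp Require Import all_boot all_algebra.
From mathcomp Require Import boolp ring zify.
Import GRing.Theory.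
Local Open Scope ring_scope.

Section Main.
Variable T : TriData.
Hypothesis HT : is_triangulated T.

Lemma x_xx (V : zmodType) (x : V) : x = x + x -> x = 0.
Proof. by move=> h; have := congr1 (fun y => y - x) h; rewrite addrK subrr => <-. Qed.

Lemma comp0r (X Y Z : Obj T) (g : Defs.Hom T Y Z) : Defs.comp g (0 : Defs.Hom T X Y) = 0.
Proof. by apply: x_xx; rewrite -(compDr _ HT) addr0. Qed.
Lemma comp0l (X Y Z : Obj T) (f : Defs.Hom T X Y) : Defs.comp (0 : Defs.Hom T Y Z) f = 0.
Proof. by apply: x_xx; rewrite -(compDl _ HT) addr0. Qed.
Lemma compNr (X Y Z : Obj T) (g : Defs.Hom T Y Z) (f : Defs.Hom T X Y) : Defs.comp g (- f) = - Defs.comp g f.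
Proof. apply/eqP; rewrite -addr_eq0 -(compDr _ HT) addNr; exact/eqP/comp0r. Qed.
Lemma compNl (X Y Z : Obj T) (g : Defs.Hom T Y Z) (f : Defs.Hom T X Y) : Defs.comp (- g) f = - Defs.comp g f.
Proof. apply/eqP; rewrite -addr_eq0 -(compDl _ HT) addNr; exact/eqP/comp0l. Qed.
Lemma Sigm0 (X Y : Obj T) : Sigm (0 : Defs.Hom T X Y) = 0.
Proof. by apply: x_xx; rewrite -(SigmD _ HT) addr0. Qed.
Lemma SigmN (X Y : Obj T) (f : Defs.Hom T X Y) : Sigm (- f) = - Sigm f.
Proof. apply/eqP; rewrite -addr_eq0 -(SigmD _ HT) addNr; exact/eqP/Sigm0. Qed.

Lemma dist_comp0 (X Y Z : Obj T) (f : Defs.Hom T X Y) (g : Defs.Hom T Y Z) (h : Defs.Hom T Z (Sig X)) :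
  dist f g h -> Defs.comp g f = 0.
Proof.
move=> H.
have [c [Hc _]] := TR3 _ HT _ _ _ _ _ _ _ _ _ _ _ _ (idm X) f (TR1_id _ HT X) H (erefl (Defs.comp f (idm X))).
by rewrite -Hc comp0r.
Qed.

Lemma dist_exact (X Y Z : Obj T) (f : Defs.Hom T X Y) (g : Defs.Hom T Y Z) (h : Defs.Hom T Z (Sig X))
  (W : Obj T) (u : Defs.Hom T W Y) :
  dist f g h -> Defs.comp g u = 0 -> exists v : Defs.Hom T W X, Defs.comp f v = u.
Proof.
move=> H Hu.
have H1 := (TR2 _ HT _ _ _ _ _ _).1 (TR1_id _ HT W).
have H2 := (TR2 _ HT _ _ _ _ _ _).1 H.
have [c [_ Hc]] := TR3 _ HT _ _ _ _ _ _ _ _ _ _ _ _ u 0 H1 H2 (etrans (comp0l _ _ _ _) (esym Hu)).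
move: Hc; rewrite compNr compNl (Sigm1 _ HT) (compm1 _ HT) => /eqP; rewrite eqr_opp => /eqP Hc.
have [v Hv] := Sigm_surj _ HT _ _ c.
exists v; apply: (Sigm_inj _ HT); by rewrite (SigmM _ HT) Hv.
Qed.

Lemma dist_shift1 (X Y Z : Obj T) (f : Defs.Hom T X Y) (g : Defs.Hom T Y Z) (h : Defs.Hom T Z (Sig X)) :
  dist f g h -> dist (- Sigm f) (- Sigm g) (- Sigm h).
Proof.
move=> H; exact: (TR2 _ HT _ _ _ _ _ _).1 ((TR2 _ HT _ _ _ _ _ _).1 ((TR2 _ HT _ _ _ _ _ _).1 H)).
Qed.

Lemma dist_shift (j : nat) (X Y Z : Obj T) (f : Defs.Hom T X Y) (g : Defs.Hom T Y Z) (h : Defs.Hom T Z (Sig X)) :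
  dist f g h -> exists (f' : Defs.Hom T (SigN j X) (SigN j Y)) (g' : Defs.Hom T (SigN j Y) (SigN j Z))
     (h' : Defs.Hom T (SigN j Z) (Sig (SigN j X))), dist f' g' h'.
Proof.
move=> H; elim: j => [|j [f' [g' [h' IH]]]]; first by exists f, g, h.
exists (- Sigm f'), (- Sigm g'), (- Sigm h'); exact: dist_shift1.
Qed.

Lemma tri_back (C0 Y : Obj T) (f : Defs.Hom T C0 Y) :
  exists (Y' : Obj T) (p : Defs.Hom T Y' C0) (r : Defs.Hom T Y (Sig Y')), dist p f r.
Proof.
have [Z [g [h H]]] := TR1_ext _ HT _ _ f.
have [Y' [a [b [ba ab]]]] := Sig_ess _ HT Z.
have Hb : isIsoM b by exists a.
have Hi : forall X : Obj T, isIsoM (idm X) by move=> X; exists (idm X); rewrite (comp1m _ HT).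
have H' : dist f (Defs.comp b g) (Defs.comp h a).
  apply: (TR1_iso _ HT _ _ _ _ _ _ _ _ _ _ _ _ _ _ _ (Hi _) (Hi _) Hb _ _ _ H).
  - by rewrite (comp1m _ HT) (compm1 _ HT).
  - by rewrite (compm1 _ HT).
  - by rewrite (Sigm1 _ HT) (comp1m _ HT) -(Defs.compA _ HT) ab (compm1 _ HT).
have [p0 Hp0] := Sigm_surj _ HT _ _ (Defs.comp h a).
exists Y', (- p0), (Defs.comp b g); apply/(TR2 _ HT).
by rewrite SigmN opprK Hp0.
Qed.

Definition dd (X Z : Obj T) : int := if asbool (iso X Z) then 1 else 0.

Lemma coeff_nil Z : coeff ([::] : fsum T) Z = 0.
Proof. by rewrite /coeff big_nil. Qed.
Lemma coeff_cons (p : int * Obj T) s Z : coeff (p :: s) Z = p.1 * dd p.2 Z + coeff s Z.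
Proof. by rewrite /coeff big_cons /dd; case: asbool; rewrite ?mulr1 ?mulr0. Qed.
Lemma coeff_cat (s1 s2 : fsum T) Z : coeff (s1 ++ s2) Z = coeff s1 Z + coeff s2 Z.
Proof. by rewrite /coeff big_cat. Qed.
Lemma coeff_fneg (s : fsum T) Z : coeff (fneg s) Z = - coeff s Z.
Proof.
elim: s => [|p s IH]; first by rewrite /fneg /= coeff_nil oppr0.
by rewrite [fneg _]/= coeff_cons IH coeff_cons /= opprD mulNr.
Qed.

Definition inRT (phi : Obj T -> int) := exists s, RT T s /\ coeff s =1 phi.

Lemma RT_in {s} : RT T s -> inRT (coeff s).
Proof. by move=> H; exists s. Qed.
Lemma in_RT {s} : inRT (coeff s) -> RT T s.
Proof. by move=> [s' [H E]]; apply: (RT_ext _ s') => // Z; rewrite E. Qed.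
Lemma inRT_ext {phi psi} : inRT phi -> phi =1 psi -> inRT psi.
Proof. by move=> [s [H E']] E; exists s; split => // Z; rewrite E' E. Qed.
Lemma inRT_0 : inRT (fun _ => 0).
Proof. by exists [::]; split; [exact: RT_nil | move=> Z; rewrite coeff_nil]. Qed.
Lemma inRT_add {phi psi} : inRT phi -> inRT psi -> inRT (fun Z => phi Z + psi Z).
Proof.
move=> [s [H E]] [s' [H' E']]; exists (s ++ s'); split; first exact: RT_cat.
by move=> Z; rewrite coeff_cat E E'.
Qed.
Lemma inRT_opp {phi} : inRT phi -> inRT (fun Z => - phi Z).
Proof.
move=> [s [H E]]; exists (fneg s); split; first exact: RT_opp.
by move=> Z; rewrite coeff_fneg E.
Qed.
Lemma inRT_sub {phi psi} : inRT phi -> inRT psi -> inRT (fun Z => phi Z - psi Z).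
Proof. by move=> H1 H2; apply: inRT_add => //; apply: inRT_opp. Qed.
Lemma inRT_muln {phi} (k : nat) : inRT phi -> inRT (fun Z => phi Z *+ k).
Proof.
move=> H; elim: k => [|k IH]; first by apply: (inRT_ext inRT_0) => Z /=; rewrite mulr0n.
by refine (inRT_ext (inRT_add H IH) _) => Z; rewrite mulrS.
Qed.
Lemma inRT_scale {phi} (c : int) : inRT phi -> inRT (fun Z => c * phi Z).
Proof.
move=> H; case: c => k.
  by refine (inRT_ext (inRT_muln k H) _) => Z; rewrite -mulr_natl natz.
refine (inRT_ext (inRT_opp (inRT_muln k.+1 H)) _) => Z.
by rewrite NegzE mulNr -mulr_natl natz.
Qed.

Lemma inRT_tri {X Y Z0 : Obj T} {f : Defs.Hom T X Y} {g : Defs.Hom T Y Z0} {h : Defs.Hom T Z0 (Sig X)} :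
  dist f g h -> inRT (fun Z => dd X Z - dd Y Z + dd Z0 Z).
Proof.
move=> H; refine (inRT_ext (RT_in (RT_gen _ _ _ _ _ _ _ H)) _) => Z.
by rewrite !coeff_cons coeff_nil /= addr0 !mul1r mulN1r addrA.
Qed.

Lemma coeff_chi_gen (A : nat -> Obj T) (m a : nat) Z :
  coeff [seq ((-1) ^+ i.+1, A i) | i <- iota a m] Z =
  \sum_(i < m) (-1) ^+ (a + i)%N.+1 * dd (A (a + i)%N) Z.
Proof.
elim: m a => [|m IH] a; first by rewrite big_ord0 coeff_nil.
rewrite /= coeff_cons IH big_ord_recl /= addn0.
congr (_ + _).
by apply: eq_bigr => i _; rewrite /bump /= add1n addSnnS.
Qed.

Lemma coeff_chi (k : nat) (A : nat -> Obj T) Z :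
  coeff (chi k A) Z = \sum_(i < k.+4) (-1) ^+ i * dd (A i.+1) Z.
Proof.
rewrite /chi coeff_chi_gen; apply: eq_bigr => i _.
by rewrite add1n !exprS mulN1r mulN1r opprK.
Qed.

Lemma nangle_RT (k : nat) (A : nat -> Obj T) alpha alast :
  nangle_k k A alpha alast -> inRT (fun Z => \sum_(i < k.+4) (-1) ^+ i * dd (A i.+1) Z).
Proof.
move=> [X [f [g [e [d [dl [H1 Hmid Hlast _ _]]]]]]].
have part : forall m, (m <= k)%N ->
  inRT (fun Z => \sum_(i < m.+2) (-1) ^+ i * dd (A i.+1) Z + (-1) ^+ m * dd (X m.+1) Z).
  elim => [|m IH] Hm.
    apply: (inRT_ext (inRT_tri H1)) => Z.
    by rewrite !big_ord_recr big_ord0 /= !expr0 !expr1; ring.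
  have Ht := inRT_tri (Hmid m.+1 Hm).
  apply: (inRT_ext (inRT_add (IH (ltnW Hm)) (inRT_scale ((-1) ^+ m.+1) Ht))) => Z.
  rewrite [in RHS]big_ord_recr /= !exprS; ring.
have Ht := inRT_tri Hlast.
apply: (inRT_ext (inRT_add (part k (leqnn k)) (inRT_scale ((-1) ^+ k.+1) Ht))) => Z.
rewrite [in RHS]big_ord_recr [in RHS]big_ord_recr /= !exprS; ring.
Qed.

Fixpoint SigmIt (k : nat) {A B : Obj T} (f : Defs.Hom T A B) : Defs.Hom T (SigN k A) (SigN k B) :=
  match k return Defs.Hom T (SigN k A) (SigN k B) with
  | 0 => f
  | k'.+1 => Sigm (SigmIt k' f)
  end.

Lemma SigmN_inj k (A B : Obj T) (f g : Defs.Hom T A B) : SigmIt k f = SigmIt k g -> f = g.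
Proof. elim: k => [//|k IH] /= /(Sigm_inj _ HT); exact: IH. Qed.
Lemma SigmN0 k (A B : Obj T) : SigmIt k (0 : Defs.Hom T A B) = 0.
Proof. elim: k => [//|k /= ->]; exact: Sigm0. Qed.

Lemma all_in_cat (C : Obj T -> Prop) (s1 s2 : fsum T) :
  all_in C s1 -> all_in C s2 -> all_in C (s1 ++ s2).
Proof. by move=> H1 H2 p /List.in_app_iff [/H1|/H2]. Qed.
Lemma all_in_nil (C : Obj T -> Prop) : all_in C [::].
Proof. by move=> p []. Qed.
Lemma all_in_1 (C : Obj T -> Prop) c X : C X -> all_in C [:: (c, X)].
Proof. by move=> H p [<-|[]]. Qed.

Definition scale (c : int) (s : fsum T) : fsum T := [seq (c * p.1, p.2) | p <- s].
Lemma coeff_scale c s Z : coeff (scale c s) Z = c * coeff s Z.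
Proof.
elim: s => [|p s IH]; first by rewrite /= coeff_nil mulr0.
by rewrite [scale _ _]/= !coeff_cons IH /= mulrDr mulrA.
Qed.
Lemma all_in_scale (C : Obj T -> Prop) c s : all_in C s -> all_in C (scale c s).
Proof.
elim: s => [|p s IH] H; first exact: all_in_nil.
move=> q [<-|Hq]; first by apply: (H p); left.
by apply: (IH _ q Hq) => r Hr; apply: (H r); right.
Qed.

Lemma RC_RT (C : Obj T -> Prop) (n : nat) s : RC T C n s -> RT T s.
Proof.
elim => {s}.
- move=> A alpha alast _ Hang; apply: in_RT.
  by apply: (inRT_ext (nangle_RT _ _ _ _ Hang)) => Z; rewrite coeff_chi.
- move=> _; apply: (RT_ext _ _ _ _ (RT_gen _ _ _ _ _ _ _ (TR1_id _ HT zero_obj))) => Z.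
  by rewrite !coeff_cons !coeff_nil /=; ring.
- exact: RT_nil.
- by move=> s1 s2 _ H1 _ H2; apply: RT_cat.
- by move=> s _ H; apply: RT_opp.
- by move=> s s' E _ H; apply: (RT_ext _ s).
Qed.

Variables (n : nat) (C : Obj T -> Prop).
Hypothesis hn : (4 <= n)%N.
Hypothesis HC : cluster_tilting (n - 2) C.
Hypothesis HS : forall A : Obj T, C A -> C (SigN (n - 2) A).

Lemma vanish (A B : Obj T) i : C A -> C B -> (1 <= i <= n - 2 - 1)%N ->
  forall w : Defs.Hom T A (SigN i B), w = 0.
Proof. by case: HC => _ H1 _ HA HB Hi w; exact: ((H1 A).1 HA i Hi B HB w). Qed.

Definition PP (Y : Obj T) (j : nat) := forall C' : Obj T, C C' ->
  forall w : Defs.Hom T C' (SigN j Y), w = 0.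
Definition QQ (Y : Obj T) (m : nat) := forall j, (1 <= j <= m)%N -> PP Y j.

Lemma step (Y : Obj T) (m : nat) : (m.+1 <= n - 2 - 1)%N -> QQ Y m ->
  exists (C0 Y' : Obj T) (p : Defs.Hom T Y' C0) (f : Defs.Hom T C0 Y) (r : Defs.Hom T Y (Sig Y')),
    [/\ C C0, dist p f r & QQ Y' m.+1].
Proof.
move=> Hm HQ.
case: HC => [[Hcf _] _ _].
have [C0 [f [HC0 Happ]]] := Hcf Y.
have [Y' [p [r Hd]]] := tri_back _ _ f.
exists C0, Y', p, f, r; split => //.
move=> [//|j'] /andP [_ Hj] C' HC' w.
case: j' Hj w => [|j'] Hj w.
- have H1 := (TR2 _ HT _ _ _ _ _ _).1 Hd.
  have H2 := (TR2 _ HT _ _ _ _ _ _).1 H1.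
  have Hz : Defs.comp (- Sigm p) w = 0.
    apply: (vanish C' C0 1) => //; apply/andP; split => //; lia.
  have [v Hv] := dist_exact _ _ _ _ _ _ _ _ H2 Hz.
  have [h Hh] := Happ C' v HC'.
  by rewrite -Hv -Hh Defs.compA ?(dist_comp0 _ _ _ _ _ _ H1) ?comp0l.
- have [p' [f' [r' Hd']]] := dist_shift j'.+1 _ _ _ _ _ _ Hd.
  have H1 := (TR2 _ HT _ _ _ _ _ _).1 Hd'.
  have H2 := (TR2 _ HT _ _ _ _ _ _).1 H1.
  have Hz : Defs.comp (- Sigm p') w = 0.
    apply: (vanish C' C0 j'.+2) => //; apply/andP; split => //; lia.
  have [v Hv] := dist_exact _ _ _ _ _ _ _ _ H2 Hz.
  rewrite -Hv (HQ j'.+1 _ C' HC' v) ?comp0r //; apply/andP; split => //.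
Qed.

Lemma res (m : nat) : (m <= n - 2 - 1)%N -> forall X : Obj T,
  exists (Y : Obj T) (s : fsum T), [/\ all_in C s, QQ Y m &
    inRT (fun Z => dd X Z - coeff s Z - (-1) ^+ m * dd Y Z)].
Proof.
elim: m => [|m IH] Hm X.
  exists X, [::]; split; first exact: all_in_nil.
    by move=> j /andP [H1 H2]; exfalso; lia.
  by apply: (inRT_ext inRT_0) => Z; rewrite coeff_nil expr0; ring.
have [Y [s [Hs HQ Hin]]] := IH (ltnW Hm) X.
have [C0 [Y' [p [f [r [HC0 Hd HQ']]]]]] := step Y m Hm HQ.
exists Y', (s ++ [:: ((-1) ^+ m, C0)]); split => //.
  by apply: all_in_cat => //; apply: all_in_1.
apply: (inRT_ext (inRT_add Hin (inRT_scale ((-1) ^+ m) (inRT_tri Hd)))) => Z.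
by rewrite coeff_cat coeff_cons coeff_nil /= exprS; ring.
Qed.

Lemma QQ_C (Y : Obj T) : QQ Y (n - 2 - 1) -> C Y.
Proof.
move=> HQ; case: HC => _ _ H2; apply/(H2 Y) => i Hi X HX g.
have Ek : (n - 2 = (n - 2 - i) + i)%N by lia.
have HX' := HS X HX; rewrite Ek /SigN iterD -/(SigN i X) -/(SigN (n - 2 - i) (SigN i X)) in HX'.
apply: (SigmN_inj (n - 2 - i)%N); rewrite SigmN0.
have Hb : (1 <= n - 2 - i <= n - 2 - 1)%N by lia.
exact: (HQ (n - 2 - i)%N Hb _ HX' (SigmIt (n - 2 - i)%N g)).
Qed.

Lemma single (X : Obj T) : exists s : fsum T, all_in C s /\ inRT (fun Z => dd X Z - coeff s Z).
Proof.
have [Y [s [Hs HQ Hin]]] := res (n - 2 - 1)%N (leqnn _) X.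
exists (s ++ [:: ((-1) ^+ (n - 2 - 1)%N, Y)]); split.
  by apply: all_in_cat => //; apply: all_in_1; apply: QQ_C.
apply: (inRT_ext Hin) => Z; rewrite coeff_cat coeff_cons coeff_nil /=; ring.
Qed.

Lemma part2 (tt : fsum T) : exists s : fsum T, all_in C s /\ inRT (fun Z => coeff tt Z - coeff s Z).
Proof.
elim: tt => [|[c X] tt [s' [Hs' Hin']]].
  exists [::]; split; first exact: all_in_nil.
  by apply: (inRT_ext inRT_0) => Z; rewrite coeff_nil subrr.
have [sX [HsX HinX]] := single X.
exists (scale c sX ++ s'); split; first by apply: all_in_cat => //; apply: all_in_scale.
apply: (inRT_ext (inRT_add (inRT_scale c HinX) Hin')) => Z.
by rewrite coeff_cat coeff_scale coeff_cons /=; ring.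
Qed.

End Main.

Theorem theorem3p1 (T : TriData) (HT : is_triangulated T) (n : nat)
  (C : Obj T -> Prop) (hn : (4 <= n)%N)
  (HC : cluster_tilting (n - 2) C)
  (HS : forall A : Obj T, C A -> C (SigN (n - 2) A)) :
  (forall s s' : fsum T, all_in C s -> all_in C s' ->
     K0C_eq C n s s' -> K0T_eq s s') /\
  (forall t : fsum T, exists s : fsum T, all_in C s /\ K0T_eq t s).
Proof.
split.
  by move=> s s' _ _ H; apply: (RC_RT T HT C n).
move=> t; have [s [Hs Hin]] := part2 T HT n C hn HC HS t.
exists s; split => //; apply: (in_RT T).
by apply: (inRT_ext T Hin) => Z; rewrite (coeff_cat T) (coeff_fneg T).
Qed.
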